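(* Let $p/q$ be a positive rational in lowest terms ($p,q\ge1$), and write $p=p_1^2+p_2^2+p_3^2+p_4^2$ with integers $p_j\ge0$. Put $A=p_1^2-p_2^2+p_3^2-p_4^2$, $B=p_1p_2+p_3p_4$, $C=p_1p_4-p_2p_3$. Then there exist integers $a,b,\gamma$ such that $$\Delta:=bA+2(\gamma-a)B+(1-b^2+4a\gamma)C$$ is relatively prime to $q$.
   Context: Equivalently, $\Delta=r_1r_4-r_2r_3$ where $r_1=-p_1-2\gamma p_3+bp_4$, $r_2=p_2+2ap_4-bp_3$, $r_3=p_3-2\gamma p_1+bp_2$, $r_4=-p_4+2ap_2-bp_1$. *)

(* Defs.v *)
From Stdlib Require Import ZArith.
Open Scope Z_scope.

Definition qA (p1 p2 p3 p4 : Z) : Z := p1^2 - p2^2 + p3^2 - p4^2.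
Definition qB (p1 p2 p3 p4 : Z) : Z := p1*p2 + p3*p4.
Definition qC (p1 p2 p3 p4 : Z) : Z := p1*p4 - p2*p3.

Definition Delta (p1 p2 p3 p4 a b g : Z) : Z :=
  b * qA p1 p2 p3 p4 + 2 * (g - a) * qB p1 p2 p3 p4
  + (1 - b^2 + 4*a*g) * qC p1 p2 p3 p4.

(* Main.v *)
Require Import Defs.
From Stdlib Require Import ZArith Znumtheory Lia.
Open Scope Z_scope.

Lemma prime_div_exists : forall n, 1 < n -> exists l, prime l /\ (l | n).
Proof.
  intros n Hn0. assert (0 <= n) by lia. revert Hn0. pattern n. apply Z_lt_induction; [|lia].
  intros x IH Hx.
  destruct (prime_dec x) as [Hp|Hp].
  - exists x. split; [exact Hp | apply Z.divide_refl].
  - destruct (not_prime_divide x Hx Hp) as [m [Hm Hmd]].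
    destruct (IH m ltac:(lia) ltac:(lia)) as [l [Hl Hld]].
    exists l. split; [exact Hl|]. eapply Z.divide_trans; eauto.
Qed.

Lemma G (f : Z -> Z -> Z -> Z)
  (Hf : forall m a b g x y z, (m | f (a+m*x) (b+m*y) (g+m*z) - f a b g)) :
  forall n, 1 <= n -> (forall l, prime l -> (l | n) -> exists a b g, ~ (l | f a b g)) ->
  exists a b g, Z.gcd (f a b g) n = 1.
Proof.
  intros n Hn0. assert (0 <= n) by lia. revert Hn0. pattern n. apply Z_lt_induction; [|lia].
  intros n0 IH Hn Hl. clear dependent n. rename n0 into n.
  destruct (Z.eq_dec n 1) as [->|Hn1].
  { exists 0, 0, 0. apply Z.gcd_1_r. }
  destruct (prime_div_exists n ltac:(lia)) as [l [Hlp [n' Hn']]].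
  pose proof (prime_ge_2 l Hlp).
  assert (Hn'1 : 1 <= n') by nia.
  destruct (IH n' ltac:(nia) Hn'1) as [a0 [b0 [g0 H0]]].
  { intros l' Hl' Hd. apply Hl; auto. rewrite Hn'. apply Z.divide_mul_l; auto. }
  apply Zgcd_1_rel_prime in H0.
  destruct (Zdivide_dec l n') as [Hd|Hd].
  - exists a0, b0, g0. apply Zgcd_1_rel_prime. rewrite Hn'.
    apply rel_prime_mult; auto.
    apply rel_prime_sym. apply rel_prime_div with (p := n'); auto. apply rel_prime_sym; auto.
  - destruct (Hl l Hlp ltac:(rewrite Hn'; apply Z.divide_mul_r; apply Z.divide_refl))
      as [a1 [b1 [g1 H1]]].
    pose proof (prime_rel_prime l Hlp n' Hd) as Hr.
    destruct (rel_prime_bezout _ _ (rel_prime_sym _ _ Hr)) as [u v Huv].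
    exists (a0 + n'*(u*(a1-a0))), (b0 + n'*(u*(b1-b0))), (g0 + n'*(u*(g1-g0))).
    apply Zgcd_1_rel_prime. rewrite Hn'. apply rel_prime_mult.
    + apply Zgcd_1_rel_prime. apply Zgcd_1_rel_prime in H0.
      destruct (Hf n' a0 b0 g0 (u*(a1-a0)) (u*(b1-b0)) (u*(g1-g0))) as [k Hk].
      replace (f (a0 + n' * (u * (a1 - a0))) (b0 + n' * (u * (b1 - b0))) (g0 + n' * (u * (g1 - g0))))
        with (f a0 b0 g0 + k * n') by lia.
      rewrite Z.gcd_comm, Z.gcd_add_mult_diag_r, Z.gcd_comm. exact H0.
    + apply rel_prime_sym. apply prime_rel_prime; auto. intro Hc. apply H1.
      assert (E : forall c0 c1, c0 + n'*(u*(c1-c0)) = c1 + l*(-v*(c1-c0))).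
      { intros. replace (n'*(u*(c1-c0))) with ((u*n')*(c1-c0)) by ring. rewrite (ltac:(lia) : u*n' = 1 - v*l). ring. }
      rewrite !E in Hc.
      pose proof (Hf l a1 b1 g1 (-v*(a1-a0)) (-v*(b1-b0)) (-v*(g1-g0))) as Hq.
      replace (f a1 b1 g1) with (f (a1 + l * (- v * (a1 - a0))) (b1 + l * (- v * (b1 - b0)))
          (g1 + l * (- v * (g1 - g0))) - (f (a1 + l * (- v * (a1 - a0))) (b1 + l * (- v * (b1 - b0)))
          (g1 + l * (- v * (g1 - g0))) - f a1 b1 g1)) by ring.
      apply Z.divide_sub_r; auto.
Qed.

Theorem proposition3p1 (p q p1 p2 p3 p4 : Z) :
  1 <= p -> 1 <= q -> Z.gcd p q = 1 ->
  0 <= p1 -> 0 <= p2 -> 0 <= p3 -> 0 <= p4 ->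
  p = p1^2 + p2^2 + p3^2 + p4^2 ->
  exists a b g : Z, Z.gcd (Delta p1 p2 p3 p4 a b g) q = 1.
Proof.
  intros Hp Hq Hpq _ _ _ _ Hps.
  apply G; auto.
  - intros m a b g x y z.
    exists (y*qA p1 p2 p3 p4 + 2*(z-x)*qB p1 p2 p3 p4
            + (-2*b*y - m*y^2 + 4*a*z + 4*x*g + 4*m*x*z)*qC p1 p2 p3 p4).
    unfold Delta. ring.
  - intros l Hl Hlq.
    destruct (Zdivide_dec l (Delta p1 p2 p3 p4 0 1 0)) as [HA|HA];
      [|exists 0, 1, 0; exact HA].
    destruct (Zdivide_dec l (Delta p1 p2 p3 p4 0 0 0)) as [HC|HC];
      [|exists 0, 0, 0; exact HC].
    destruct (Zdivide_dec l (Delta p1 p2 p3 p4 0 0 1)) as [HB|HB];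
      [|exists 0, 0, 1; exact HB].
    exfalso.
    replace (Delta p1 p2 p3 p4 0 1 0) with (qA p1 p2 p3 p4) in HA by (unfold Delta; ring).
    replace (Delta p1 p2 p3 p4 0 0 0) with (qC p1 p2 p3 p4) in HC by (unfold Delta; ring).
    replace (Delta p1 p2 p3 p4 0 0 1) with (2*qB p1 p2 p3 p4 + qC p1 p2 p3 p4) in HB
      by (unfold Delta; ring).
    assert (H2B : (l | 2*qB p1 p2 p3 p4)).
    { replace (2*qB p1 p2 p3 p4) with ((2*qB p1 p2 p3 p4 + qC p1 p2 p3 p4) - qC p1 p2 p3 p4) by ring.
      apply Z.divide_sub_r; auto. }
    assert (Hpp : (l | p*p)).
    { replace (p*p) with (qA p1 p2 p3 p4 * qA p1 p2 p3 p4 + (2*qB p1 p2 p3 p4)*(2*qB p1 p2 p3 p4)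
         + 4*qC p1 p2 p3 p4 * qC p1 p2 p3 p4) by (subst p; unfold qA, qB, qC; ring).
      apply Z.divide_add_r; [apply Z.divide_add_r|].
      - apply Z.divide_mul_l; auto.
      - apply Z.divide_mul_l; auto.
      - apply Z.divide_mul_r; auto. }
    assert (Hlp : (l | p)) by (destruct (prime_mult l Hl p p Hpp); auto).
    assert (H1 : (l | 1)) by (rewrite <- Hpq; apply Z.gcd_greatest; auto).
    pose proof (prime_ge_2 l Hl). apply Z.divide_pos_le in H1; lia.
Qed.
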